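(* Let $m\geq 0$, $n\geq 1$, and let $\lambda$ be a partition of $n$ with $m$-Durfee rectangle symbol $(\alpha,\beta)_{(m+j)\times j}$. Then $\operatorname{rank}(\lambda)\geq -m+1$ if and only if either $j=0$, or $j\geq 1$ and $\ell(\beta)+1\leq \ell(\alpha)$.
   Context: For a partition $\lambda=(\lambda_1\geq\lambda_2\geq\cdots)$, $\ell(\lambda)$ is its number of parts and $\operatorname{rank}(\lambda)=\lambda_1-\ell(\lambda)$. The $m$-Durfee rectangle symbol of $\lambda$ is defined as follows. - If $\ell(\lambda)>m$, let $j\geq1$ be the largest integer with $\lambda_{m+j}\geq j$; this gives the $(m+j)\times j$ rectangle (with $m+j$ rows and $j$ columns) in the Ferrers diagram. Then $\alpha=(\alpha_1,\ldots,\alpha_s)$ is the partition formed by the columns to the right of the rectangle within the first $m+j$ rows: $\alpha_i$ is the number of $k\leq m+j$ with $\lambda_k\geq j+i$. Also $\beta=(\beta_1,\ldots,\beta_t)=(\lambda_{m+j+1},\lambda_{m+j+2},\ldots)$ consists of the rows below the rectangle. Thus $m+j\geq\alpha_1\geq\cdots\geq\alpha_s$, $j\geq\beta_1\geq\cdots\geq\beta_t$, and $n=j(m+j)+\sum\alpha_i+\sum\beta_i$. - If $\ell(\lambda)\leq m$, one sets $j=0$, $\alpha=\lambda'$ (the conjugate of $\lambda$) and $\beta=\emptyset$. The symbol is written $(\alpha,\beta)_{(m+j)\times j}$, and $\ell(\alpha),\ell(\beta)$ denote the numbers of parts of $\alpha$ and $\beta$. *)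

(* Defs.v *)
From mathcomp Require Import all_boot all_order all_algebra.
Set Implicit Arguments. Unset Strict Implicit. Unset Printing Implicit Defensive.

Definition is_partition (n : nat) (lam : seq nat) : Prop :=
  [/\ sorted geq lam, all (fun x => 0 < x) lam & sumn lam = n].

(* lambda_i, 1-indexed (0 beyond the length) *)
Definition part (lam : seq nat) (i : nat) : nat := nth 0 lam i.-1.

Definition plen (lam : seq nat) : nat := size lam.

Definition prank (lam : seq nat) : int := (part lam 1)%:Z - (plen lam)%:Z.

Definition conj_part (lam : seq nat) : seq nat :=
  [seq count (fun x => i <= x) lam | i <- iota 1 (part lam 1)].

(* j of the m-Durfee rectangle: largest j >= 1 with lambda_{m+j} >= j
   when ell(lambda) > m; 0 otherwise. (Any such j satisfies j <= ell.) *)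
Definition durfee_j (m : nat) (lam : seq nat) : nat :=
  if m < plen lam then
    \max_(j < (plen lam).+1 | (0 < j) && (j <= part lam (m + j))) j
  else 0.

(* alpha: alpha_i = #{k <= m+j : lambda_k >= j+i}, for the columns to the
   right of the rectangle, i = 1 .. lambda_1 - j; alpha = conjugate when j = 0. *)
Definition durfee_alpha (m : nat) (lam : seq nat) : seq nat :=
  if m < plen lam then
    let j := durfee_j m lam in
    [seq count (fun x => j + i <= x) (take (m + j) lam) | i <- iota 1 (part lam 1 - j)]
  else conj_part lam.

(* beta: the rows below the rectangle; empty when j = 0 *)
Definition durfee_beta (m : nat) (lam : seq nat) : seq nat :=
  if m < plen lam then drop (m + durfee_j m lam) lam else [::].

(* Main.v *)
Require Import Defs.
From mathcomp Require Import all_boot all_order all_algebra.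
From mathcomp Require Import zify.
Import Order.TTheory GRing.Theory Num.Theory.

Lemma head_ge (lam : seq nat) k : sorted geq lam -> nth 0 lam k <= nth 0 lam 0.
Proof.
move=> Hs; case: (ltnP k (size lam)) => Hk; last by rewrite nth_default.
have := @sorted_leq_nth _ geq _ _ 0 lam Hs 0 k.
rewrite !inE => H; apply: H => //; first by move=> a b c /= ? ?; lia.
  by move=> a /=.
  by lia.
Qed.

Theorem proposition2p3 (m n : nat) (lam : seq nat) :
  1 <= n -> is_partition n lam ->
  ((1 - (m%:Z) <= prank lam)%R <->
   (durfee_j m lam = 0 \/
    (1 <= durfee_j m lam /\ size (durfee_beta m lam) + 1 <= size (durfee_alpha m lam)))).
Proof.
move=> Hn [Hs Hpos Hsum].
have Hl : 0 < size lam by case: lam Hsum Hn {Hs Hpos} => //= <-.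
have H1 : 0 < nth 0 lam 0.
  by case: lam Hpos Hl {Hs Hsum} => //= a l /andP[].
rewrite /durfee_j /durfee_alpha /durfee_beta /prank /plen /part /=.
case: ltnP => Hm.
- set P := (fun j : 'I_(size lam).+1 => (0 < j) && (j <= nth 0 lam (m + j).-1)).
  have o1 : 1 < (size lam).+1 by rewrite ltnS.
  have P1 : P (Ordinal o1).
    rewrite /P /= addn1 /=.
    have : nth 0 lam m \in lam by rewrite mem_nth.
    by move: Hpos => /allP H /H.
  have cP : 0 < #|P| by apply/card_gt0P; exists (Ordinal o1).
  have [i0 Pi0 EJ] := @eq_bigmax_cond _ P (fun j => nat_of_ord j) cP.
  rewrite EJ.
  move: Pi0; rewrite /P /= => /andP[Hi0 Hi0'].
  have Hsz : m + i0 <= size lam.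
    case: (leqP (m + i0) (size lam)) => // Hc.
    rewrite nth_default in Hi0'; lia.
  have Hh := @head_ge lam (m + i0).-1 Hs.
  rewrite size_map size_iota size_drop.
  have -> : durfee_j m lam = i0 by rewrite /durfee_j /plen Hm EJ.
  split.
  + move=> H; right; split => //. lia.
  + case => [|[_ H]]; first lia.
    lia.
- split => _; first by left.
  lia.
Qed.
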